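(* Let $q>4$ and let $\mathcal{C}\le\mathbb{F}_q^{2n}$ be a formally self-dual divisible linear code of length $2n$. Then $\mathcal{C}$ is monomially equivalent to the direct sum of $n$ copies of $\langle(1,1)\rangle_{\mathbb{F}_q}$.
   Context: For a linear code $\mathcal{C}\le\mathbb{F}_q^N$, $W_\mathcal{C}(x,y)=\sum_{c\in\mathcal{C}}x^{N-\mathrm{wt}(c)}y^{\mathrm{wt}(c)}$, where $\mathrm{wt}(c)$ is the number of nonzero coordinates. $\mathcal{C}$ is formally self-dual if $W_\mathcal{C}(x,y)=W_\mathcal{C}\big(\tfrac{x+(q-1)y}{\sqrt q},\tfrac{x-y}{\sqrt q}\big)$. $\mathcal{C}$ is divisible if there is an integer $\Delta>1$ dividing the weight of every codeword. Two codes are monomially equivalent if one is the image of the other under $v\mapsto DPv$ with $D$ invertible diagonal and $P$ a permutation matrix; the direct sum of $n$ copies of $\langle(1,1)\rangle_{\mathbb{F}_q}$ is the code in $\mathbb{F}_q^{2n}$ with block-diagonal generator matrix of $n$ blocks $(1\ 1)$. *)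

(* Defs.v *)
From HB Require Import structures.
From mathcomp Require Import all_boot all_order all_algebra all_fingroup all_field.
Set Implicit Arguments. Unset Strict Implicit. Unset Printing Implicit Defensive.
Import Order.TTheory GRing.Theory Num.Theory.
Local Open Scope ring_scope.

Notation code F N := {vspace 'rV[F]_N}.

Definition wt (F : finFieldType) (N : nat) (c : 'rV[F]_N) : nat :=
  #|[set i : 'I_N | c 0 i != 0]|.

Definition weight_enum (F : finFieldType) (N : nat) (C : code F N) (x y : algC) : algC :=
  \sum_(c : 'rV[F]_N | c \in C) x ^+ (N - wt c) * y ^+ (wt c).

(* Formally self-dual: W_C(x,y) = W_C((x+(q-1)y)/sqrt q, (x-y)/sqrt q),
   as an identity of polynomials (equivalently of functions on algC, an infinite field). *)
Definition formally_self_dual (F : finFieldType) (N : nat) (C : code F N) : Prop :=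
  let q := #|F| in
  forall x y : algC,
    weight_enum C x y =
    weight_enum C ((x + (q - 1)%N%:R * y) / sqrtC q%:R) ((x - y) / sqrtC q%:R).

Definition divisible (F : finFieldType) (N : nat) (C : code F N) : Prop :=
  exists Delta : nat, (1 < Delta)%N /\ forall c, c \in C -> (Delta %| wt c)%N.

Definition monomially_equivalent (F : finFieldType) (N : nat) (C C' : code F N) : Prop :=
  exists (D : 'M[F]_N) (s : 'S_N),
    is_diag_mx D /\ D \in unitmx /\
    forall v : 'rV[F]_N,
      v \in C' <-> exists2 c, c \in C & v = (D *m perm_mx s *m c^T)^T.

(* Block-diagonal generator matrix with n blocks (1 1). *)
Definition rep_gen (F : finFieldType) (n : nat) : 'M[F]_(n, 2 * n) :=
  \matrix_(i < n, j < 2 * n) (if (j %/ 2)%N == i then 1 else 0).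

Definition rep_sum (F : finFieldType) (n : nat) : code F (2 * n) :=
  <<[seq row i (rep_gen F n) | i <- enum 'I_n]>>%VS.

(* Main.v *)
Require Import Defs.
From HB Require Import structures.
From mathcomp Require Import all_boot all_order all_algebra all_fingroup all_field.
From mathcomp Require Import ring lra zify.
From Stdlib Require Import Classical.
Set Implicit Arguments. Unset Strict Implicit. Unset Printing Implicit Defensive.
Import Order.TTheory GRing.Theory Num.Theory.
Local Open Scope ring_scope.
Lemma natr_inj_C (i j : nat) : (i%:R : algC) = j%:R -> i = j.
Proof. by move/eqP; rewrite eqr_nat => /eqP. Qed.

Lemma poly_allroots (p : {poly algC}) : (forall x, p.[x] = 0) -> p = 0.
Proof.
move=> H; apply/eqP; apply/negPn/negP => pn0.
set rs := [seq (i%:R : algC) | i <- iota 0 (size p)].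
have H1 : all (root p) rs by apply/allP=> x _; rewrite /root H.
have H2 : uniq rs.
  rewrite map_inj_uniq ?iota_uniq // => i j; exact: natr_inj_C.
by have := max_poly_roots pn0 H1 H2; rewrite size_map size_iota ltnn.
Qed.

Section Eigen.
Variable (W : algC -> algC -> algC) (N : nat).
Hypothesis Whom : forall a x y, W (a * x) (a * y) = a ^+ N * W x y.
Hypothesis Wpoly : forall x0 x1 y0 y1, exists P : {poly algC},
  (size P <= N.+1)%N /\ forall z, P.[z] = W (x0 + x1 * z) (y0 + y1 * z).
Variables (gx gy : algC -> algC -> algC).
Hypothesis Winv : forall x y, W (gx x y) (gy x y) = W x y.
Variables (al be l1 l2 : algC).
Hypothesis albe : al != be.
Hypothesis l2nz : l2 != 0.
Hypothesis eig1 : forall x y, gx x y + al * gy x y = l1 * (x + al * y).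
Hypothesis eig2 : forall x y, gx x y + be * gy x y = l2 * (x + be * y).
Hypothesis nroot : forall k, (0 < k)%N -> (l1 / l2) ^+ k != 1.

Lemma pt_eq x y x' y' : x + al*y = x' + al*y' -> x + be*y = x' + be*y' ->
  x = x' /\ y = y'.
Proof.
move=> h1 h2.
have hy : y = y'.
  have : (al - be) * (y - y') = 0 by rewrite mulrBl !mulrBr; 
    apply/eqP; rewrite subr_eq0; apply/eqP; 
    move: h1 h2 => /eqP; rewrite -subr_eq0 => /eqP h1 /eqP; rewrite -subr_eq0 => /eqP h2;
    apply/eqP; rewrite -subr_eq0; apply/eqP; rewrite -[RHS](subr0 0); rewrite -{1}h1 -h2; ring.
  by move/eqP; rewrite mulf_eq0 subr_eq0 (negPf albe) /= subr_eq0 => /eqP.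
by split=> //; subst y'; move: h1 => /addIr.
Qed.

Lemma eigen_form : exists K a, (a <= N)%N /\ forall x y, x + be * y != 0 ->
  W x y = K * (x + al*y)^+a * (x + be*y)^+(N - a).
Proof.
have dn0 : al - be != 0 by rewrite subr_eq0.
pose px z := al/(al - be) + (-be/(al - be)) * z.
pose py z := -1/(al - be) + (1/(al - be)) * z.
have pu z : px z + al * py z = z by rewrite /px /py; field.
have pv z : px z + be * py z = 1 by rewrite /px /py; field.
have [P [szP HP]] := Wpoly (al/(al - be)) (-be/(al - be)) (-1/(al - be)) (1/(al - be)).
set r := l1 / l2.
have key z : P.[z] = l2 ^+ N * P.[r * z].
  rewrite !HP -/(px z) -/(py z) -/(px (r*z)) -/(py (r*z)) -Whom -[LHS]Winv.
  have [-> ->] : gx (px z) (py z) = l2 * px (r * z) /\ gy (px z) (py z) = l2 * py (r*z).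
    apply: pt_eq.
      by rewrite eig1 pu [al * (l2 * _)]mulrCA -mulrDr pu /r; field.
    by rewrite eig2 pv [be * (l2 * _)]mulrCA -mulrDr pv.
  by [].
pose Q := \poly_(i < N.+1) (l2 ^+ N * (r ^+ i * P`_i)).
have PQ : P = Q.
  apply/eqP; rewrite -subr_eq0; apply/eqP/poly_allroots => z.
  rewrite hornerD hornerN horner_poly key (horner_coef_wide _ szP) mulr_sumr.
  apply/eqP; rewrite subr_eq0; apply/eqP/eq_bigr => i _; rewrite exprMn; ring.
have cP i : (i < N.+1)%N -> P`_i = l2 ^+ N * (r ^+ i * P`_i).
  by move=> hi; rewrite {1}PQ coef_poly hi.
have repr x y : x + be * y != 0 ->
    W x y = (x + be * y) ^+ N * P.[(x + al * y) / (x + be * y)].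
  move=> vn0; set u := x + al * y; set v := x + be * y.
  have [E1 E2] : x = v * px (u/v) /\ y = v * py (u/v).
    apply: pt_eq.
      by rewrite [al * (v * _)]mulrCA -mulrDr pu [v * (u / v)]mulrC divfK.
    by rewrite [be * (v * _)]mulrCA -mulrDr pv mulr1.
  by rewrite HP -Whom -E1 -E2.
have [P0|Pn0] := eqVneq P 0.
  by exists 0, 0%N; split=> // x y vn0; rewrite repr // P0 horner0 mulr0 !mul0r.
set a := (size P).-1.
have szPa : size P = a.+1 by rewrite /a prednK // size_poly_gt0.
have aN : (a <= N)%N by rewrite -ltnS -szPa.
have Pa0 : P`_a != 0.
  by have := Pn0; rewrite -lead_coef_eq0 lead_coefE.
have PE : P = P`_a *: 'X^a.
  apply/polyP=> i; rewrite coefZ coefXn.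
  have [ia|ia|->] := ltngtP i a; last by rewrite mulr1.
  - rewrite mulr0.
    apply/eqP; apply: contraT => Pi0.
    have h1 : l2 ^+ N * r ^+ i = 1.
      apply: (mulIf Pi0) => /=; rewrite mul1r -mulrA; symmetry; apply: cP.
      by rewrite ltnS (leq_trans (ltnW ia)).
    have h2 : l2 ^+ N * r ^+ a = 1.
      apply: (mulIf Pa0) => /=; rewrite mul1r -mulrA; symmetry; apply: cP.
      by rewrite ltnS.
    have : r ^+ (a - i) = 1.
      by rewrite -[LHS]mul1r -{1}h1 -mulrA -exprD subnKC ?(ltnW ia) // h2.
    by move=> h; have := @nroot (a - i); rewrite subn_gt0 ia -/r h eqxx; apply.
  - rewrite mulr0; apply: nth_default; by rewrite szPa.
exists P`_a, a; split=> // x y vn0; rewrite repr // {1}PE hornerZ hornerXn.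
set u := x + al * y; set v := x + be * y.
rewrite -{1}(subnK aN) exprD expr_div_n; field.
by rewrite expf_neq0.
Qed.
End Eigen.
Section Code.
Variables (F : finFieldType) (N : nat) (C : code F N).

Lemma wt_le (c : 'rV[F]_N) : (wt c <= N)%N.
Proof. by rewrite /wt (leq_trans (max_card _)) // card_ord. Qed.

Lemma wt_eq0 (c : 'rV[F]_N) : (wt c == 0%N) = (c == 0).
Proof.
rewrite /wt cards_eq0; apply/eqP/eqP => [h|->].
  apply/rowP => j; rewrite mxE; apply/eqP/negPn/negP => hj.
  have : j \in [set i | c 0 i != 0] by rewrite inE.
  by rewrite h inE.
by apply/setP => j; rewrite !inE mxE eqxx.
Qed.

Lemma W_hom a x y : weight_enum C (a * x) (a * y) = a ^+ N * weight_enum C x y.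
Proof.
rewrite /weight_enum mulr_sumr; apply: eq_bigr => c _.
rewrite !exprMn mulrACA -exprD subnK ?wt_le //; ring.
Qed.

Lemma lin_size (c0 c1 : algC) : (size (c0%:P + c1 *: 'X)%R <= 2)%N.
Proof.
rewrite (leq_trans (size_polyD _ _)) // geq_max (leq_trans (size_polyC_leq1 _)) //.
by rewrite (leq_trans (size_scale_leq _ _)) // size_polyX.
Qed.

Lemma lin_exp_size (c0 c1 : algC) k : (size ((c0%:P + c1 *: 'X) ^+ k)%R <= k.+1)%N.
Proof.
rewrite (leq_trans (size_poly_exp_leq _ _)) // ltnS.
have := lin_size c0 c1; case: (size _) => [|[|[|]]] //= _; by rewrite ?mul0n ?mul1n.
Qed.

Lemma W_poly x0 x1 y0 y1 : exists P : {poly algC},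
  (size P <= N.+1)%N /\ forall z, P.[z] = weight_enum C (x0 + x1 * z) (y0 + y1 * z).
Proof.
exists (\sum_(c : 'rV[F]_N | c \in C)
   (x0%:P + x1 *: 'X) ^+ (N - wt c) * (y0%:P + y1 *: 'X) ^+ (wt c)).
split.
  rewrite (leq_trans (size_sum _ _ _)) //; apply/bigmax_leqP => c _.
  rewrite (leq_trans (size_polyMleq _ _)) //.
  have h1 := lin_exp_size x0 x1 (N - wt c); have h2 := lin_exp_size y0 y1 (wt c).
  have := leq_add h1 h2; rewrite addSn addnS subnK ?wt_le //.
  by case: (size _ + size _)%N => //= k; rewrite ltnS => /ltnW.
move=> z; rewrite horner_sum /weight_enum; apply: eq_bigr => c _.
by rewrite hornerM !horner_exp !hornerD !hornerC !hornerZ hornerX.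
Qed.

Lemma W_rot (D : nat) (z : algC) x y :
  (forall c, c \in C -> (D %| wt c)%N) -> z ^+ D = 1 ->
  weight_enum C x (z * y) = weight_enum C x y.
Proof.
move=> hD hz; rewrite /weight_enum; apply: eq_bigr => c cC.
have /dvdnP[k ->] := hD c cC.
by rewrite exprMn mulnC exprM hz expr1n mul1r.
Qed.

Definition fpoly : {poly algC} := \sum_(c : 'rV[F]_N | c \in C) 'X^(wt c).

Lemma fpolyE t : fpoly.[t] = weight_enum C 1 t.
Proof.
rewrite horner_sum /weight_enum; apply: eq_bigr => c _.
by rewrite hornerXn expr1n mul1r.
Qed.

Lemma coef_fpoly k :
  fpoly`_k = (#|[pred c : 'rV[F]_N | (c \in C) && (wt c == k)]|)%:R.
Proof.
rewrite /fpoly coef_sum.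
under eq_bigr do rewrite coefXn.
rewrite -sum1_card natr_sum big_mkcondr /=; apply: eq_bigr => c _.
by rewrite eq_sym; case: (_ == _).
Qed.

Lemma fpoly0 : fpoly.[0] = 1.
Proof.
rewrite horner_coef0 coef_fpoly -[1]/(1%:R).
congr (_ %:R); rewrite (@eq_card _ _ (pred1 (0:'rV[F]_N))) ?card1 // => c /=.
rewrite !inE wt_eq0; case: eqP => [->|_]; by rewrite ?mem0v ?andbF.
Qed.

Lemma fpoly1 : fpoly.[1] = (#|F| ^ \dim C)%:R.
Proof.
rewrite -card_vspace horner_sum.
under eq_bigr do rewrite hornerXn expr1n.
by rewrite sumr_const.
Qed.

End Code.
Lemma coef_lin_exp (c : algC) a k :
  ((1 + c *: 'X) ^+ a)`_k = ('C(a, k))%:R * c ^+ k.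
Proof.
elim: a k => [|a IH] k.
  by rewrite expr0 coef1; case: k => [|k] //=; rewrite ?bin0 ?mul1r ?mul0r.
rewrite exprSr mulrDr mulr1 coefD -scalerAr coefZ coefMX.
case: k => [|k] /=; first by rewrite IH !bin0 mulr0 addr0.
by rewrite !IH binS natrD exprS; ring.
Qed.

Lemma bin2_alg a : 2 * ('C(a, 2))%:R = (a%:R) * (a%:R - 1) :> algC.
Proof.
elim: a => [|a IH]; first by rewrite bin0n mulr0 mul0r.
by rewrite binS bin1 natrD mulrDr IH -addn1 natrD; ring.
Qed.

Lemma coefM1 (p r : {poly algC}) : (p * r)`_1 = p`_0 * r`_1 + p`_1 * r`_0.
Proof. by rewrite coefM !big_ord_recr big_ord0 /= add0r. Qed.

Lemma coefM2 (p r : {poly algC}) :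
  (p * r)`_2 = p`_0 * r`_2 + p`_1 * r`_1 + p`_2 * r`_0.
Proof. by rewrite coefM !big_ord_recr big_ord0 /= add0r. Qed.

Section Branch.
Variables (F : finFieldType) (N : nat) (C : code F N).
Hypothesis hq : (4 < #|F|)%N.
Hypothesis fsd : formally_self_dual C.
Variable z : algC.
Hypothesis hz0 : z != 0.
Hypothesis hrot : forall x y, weight_enum C x (z * y) = weight_enum C x y.

Definition mm : algC := (#|F| - 1)%N%:R.
Definition ww : algC := sqrtC (#|F|%:R).
Definition ss : algC := sqrtC ((1 + z) ^+ 2 + 4 * mm * z).
Definition al : algC := (- (1 + z) + ss) / 2.
Definition be : algC := (- (1 + z) - ss) / 2.

Lemma two_nz : (2 : algC) != 0. Proof. by rewrite pnatr_eq0. Qed.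

Lemma qE : (#|F|%:R : algC) = mm + 1.
Proof. by rewrite /mm natrB ?subrK // (leq_trans _ hq). Qed.

Lemma q_nz : (#|F|%:R : algC) != 0.
Proof. by rewrite pnatr_eq0 -lt0n (leq_trans _ hq). Qed.

Lemma ww_nz : ww != 0.
Proof. by rewrite /ww sqrtC_eq0 q_nz. Qed.

Lemma alpbe : al + be = - (1 + z).
Proof. by rewrite /al /be; field. Qed.

Lemma altbe : al * be = - (mm * z).
Proof.
have h : ss ^+ 2 = (1 + z) ^+ 2 + 4 * mm * z by rewrite /ss sqrtCK.
rewrite /al /be; apply: (mulIf (two_nz)); apply: (mulIf (two_nz)).
rewrite -[LHS]/(_) ; set S := ss.
have -> : (- (1 + z) + S) / 2 * ((- (1 + z) - S) / 2) * 2 * 2 =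
  (1 + z) ^+ 2 - S ^+ 2 by field.
by rewrite h; ring.
Qed.

Lemma prodAB : (1 + al) * (1 + be) = - (#|F|%:R * z).
Proof.
have -> : (1 + al) * (1 + be) = 1 + (al + be) + al * be by ring.
by rewrite alpbe altbe qE; ring.
Qed.

Lemma sumAB : (1 + al) + (1 + be) = 1 - z.
Proof.
have -> : (1 + al) + (1 + be) = 2 + (al + be) by ring.
by rewrite alpbe; ring.
Qed.

Lemma A_nz : 1 + al != 0.
Proof.
apply/negP => /eqP h; have := prodAB; rewrite h mul0r => /eqP.
by rewrite eq_sym oppr_eq0 mulf_eq0 (negPf q_nz) (negPf hz0).
Qed.

Lemma B_nz : 1 + be != 0.
Proof.
apply/negP => /eqP h; have := prodAB; rewrite h mulr0 => /eqP.
by rewrite eq_sym oppr_eq0 mulf_eq0 (negPf q_nz) (negPf hz0).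
Qed.

Lemma al_root : mm * z = al ^+ 2 + (1 + z) * al.
Proof.
have hb : be = - (1 + z) - al by rewrite -alpbe; ring.
have := altbe; rewrite hb => h.
by rewrite -[mm * z]opprK -h; ring.
Qed.

Lemma be_root : mm * z = be ^+ 2 + (1 + z) * be.
Proof.
have ha : al = - (1 + z) - be by rewrite -alpbe; ring.
have := altbe; rewrite ha => h.
by rewrite -[mm * z]opprK -h; ring.
Qed.

Definition rho := (1 + al) / (1 + be).

Lemma kappa_Aint k : (0 < k)%N -> rho ^+ k = 1 ->
  (1 - z) * (1 - z^-1) / #|F|%:R \in Aint.
Proof.
move=> k0 hk.
have rn0 : rho != 0 by rewrite /rho mulf_neq0 ?invr_eq0 ?A_nz ?B_nz.
have rA : rho \in Aint by apply: (Aint_unity_root k0); rewrite unity_rootE hk.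
have rV : rho^-1 = rho ^+ k.-1.
  by apply: (mulfI rn0); rewrite divff // -exprS prednK.
have -> : (1 - z) * (1 - z^-1) / #|F|%:R = rho + rho^-1 + 2.
  have e : rho + rho^-1 + 2 = ((1 + al) + (1 + be)) ^+ 2 / ((1 + al) * (1 + be)).
    rewrite /rho; field; by rewrite A_nz B_nz.
  rewrite e sumAB prodAB; field; by rewrite hz0 q_nz.
by rewrite rpredD ?rpredD // ?rV ?rpredX // (rpred_nat _ 2).
Qed.

Lemma branch :
  (exists k, (0 < k)%N /\ rho ^+ k = 1) \/
  (exists a, (a <= N)%N /\
     fpoly C = (1 + al *: 'X) ^+ a * (1 + be *: 'X) ^+ (N - a)).
Proof.
case: (classic (exists k, (0 < k)%N /\ rho ^+ k = 1)) => [h|hn]; [by left|right].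
have nroot k : (0 < k)%N -> ((1 + al) / ww / ((1 + be) / ww)) ^+ k != 1.
  move=> k0; apply/negP => /eqP hk; apply: hn; exists k; split=> //.
  rewrite -hk /rho; congr (_ ^+ _); field; by rewrite ww_nz B_nz.
have fsd' : forall x y, weight_enum C x y =
    weight_enum C ((x + mm * y) / ww) ((x - y) / ww) := fsd.
pose gx x y := (x + mm * (z * y)) / ww.
pose gy x y := (x - z * y) / ww.
have Winv x y : weight_enum C (gx x y) (gy x y) = weight_enum C x y.
  by rewrite /gx /gy -fsd' hrot.
have albe : al != be.
  apply/negP => /eqP e; have := nroot 1%N isT; rewrite expr1 e.
  by rewrite divff ?eqxx // mulf_neq0 ?invr_eq0 ?B_nz ?ww_nz.
have l2nz : (1 + be) / ww != 0 by rewrite mulf_neq0 ?invr_eq0 ?B_nz ?ww_nz.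
have eig1 x y : gx x y + al * gy x y = (1 + al) / ww * (x + al * y).
  rewrite /gx /gy [mm * (z * y)]mulrA al_root; field; by rewrite ww_nz.
have eig2 x y : gx x y + be * gy x y = (1 + be) / ww * (x + be * y).
  rewrite /gx /gy [mm * (z * y)]mulrA be_root; field; by rewrite ww_nz.
have [K [a [aN HK]]] := eigen_form (@W_hom _ _ C) (@W_poly _ _ C) Winv albe l2nz
   eig1 eig2 nroot.
have Bp : (1 + be *: 'X : {poly algC}) != 0.
  apply/negP => /eqP h; have := congr1 (fun p : {poly algC} => p`_0) h.
  by rewrite coefD coef1 coefZ coefX mulr0 addr0 coef0 => /eqP; rewrite oner_eq0.
have E : fpoly C = K *: ((1 + al *: 'X) ^+ a * (1 + be *: 'X) ^+ (N - a)).
  apply/eqP; rewrite -subr_eq0; apply/eqP.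
  apply: (mulIf Bp); rewrite mul0r; apply: poly_allroots => t.
  rewrite !(hornerM, hornerD, hornerN, hornerZ, horner_exp, hornerX, hornerC).
  have [e|ne] := eqVneq (1 + be * t) 0; first by rewrite e mulr0.
  by rewrite fpolyE HK // mulrA subrr mul0r.
exists a; split=> //; rewrite E.
have : (fpoly C).[0] = K.
  by rewrite E !(hornerM, hornerD, hornerZ, horner_exp, hornerX, hornerC) !mulr0 !addr0 !expr1n !mulr1.
by rewrite fpoly0 => <-; rewrite scale1r.
Qed.

End Branch.
Lemma int_in01 (x : algC) : x \in Num.int -> 0 < x -> x < 1 -> False.
Proof.
move=> xi x0 x1; move: xi; rewrite intrEge0 ?ltW // => /natrP[k kE].
move: x0 x1; rewrite kE ltr0n ltrn1; by case: k {kE}.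
Qed.

Lemma ratq_notAint (a b : nat) : (0 < a)%N -> (a < b)%N ->
  (a%:R / b%:R : algC) \in Aint -> False.
Proof.
move=> a0 ab hA; apply: (@int_in01 (a%:R / b%:R)).
- by apply: Cint_rat_Aint => //; rewrite rpred_div ?rpred_nat.
- by rewrite divr_gt0 ?ltr0n // (leq_trans _ ab).
- by rewrite ltr_pdivrMr ?ltr0n ?(leq_trans _ ab) // mul1r ltr_nat.
Qed.

Lemma prod_one_sub (D : nat) (g : algC) : D.-primitive_root g ->
  \prod_(1 <= j < D) (1 - g ^+ j) = D%:R.
Proof.
move=> prim; have D0 := prim_order_gt0 prim.
have h := factor_Xn_sub_1 prim; rewrite big_ltn // expr0 subrX1 in h.
have h2 : \prod_(1 <= i < D) ('X - (g ^+ i)%:P) = \sum_(i < D) 'X^i.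
  by apply: (mulfI (negbT (polyXsubC_eq0 (1 : algC)))); rewrite h polyC1.
have h3 : (\prod_(1 <= i < D) ('X - (g ^+ i)%:P)).[1] = (\sum_(i < D) 'X^i).[1]
  by rewrite h2.
rewrite horner_prod horner_sum in h3.
have h4 : \sum_(i < D) ('X^i : {poly algC}).[1] = D%:R.
  transitivity (\sum_(i < D) (1 : algC)).
    by apply: eq_bigr => i _; rewrite hornerXn expr1n.
  by rewrite sumr_const card_ord.
rewrite h4 in h3; rewrite -h3; apply: eq_bigr => i _.
by rewrite hornerXsubC.
Qed.

Lemma prod_one_subV (D : nat) (g : algC) : D.-primitive_root g ->
  \prod_(1 <= j < D) (1 - (g ^+ j)^-1) = D%:R.
Proof.
move=> prim; have D0 := prim_order_gt0 prim.
have gn0 : g != 0.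
  by apply/negP => /eqP g0; have := prim_expr_order prim; rewrite g0 expr0n gtn_eqF // => /eqP; rewrite eq_sym oner_eq0.
rewrite -(prod_one_sub prim) big_nat_rev /=.
apply: eq_big_nat => i /andP[i1 iD]; congr (1 - _).
have e : (1 + D - i.+1 = D - i)%N by rewrite add1n subSS.
rewrite e; apply: (mulfI (expf_neq0 (D - i) gn0)) => /=.
by rewrite divff ?expf_neq0 // -exprD subnK ?(ltnW iD) // prim_expr_order.
Qed.

Lemma sq_lt_pow_aux k : ((k + 3) * (k + 3) < 5 ^ (k + 2))%N.
Proof.
elim: k => [//|k IH].
have h : ((k.+1 + 3) * (k.+1 + 3) <= 5 * ((k + 3) * (k + 3)))%N by nia.
apply: (leq_ltn_trans h); rewrite addSn expnS ltn_pmul2l //.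
Qed.

Lemma sq_lt_pow (D q : nat) : (3 <= D)%N -> (5 <= q)%N -> (D * D < q ^ D.-1)%N.
Proof.
move=> hD hq; apply: (@leq_trans (5 ^ D.-1)); last first.
  by rewrite leq_exp2r // -subn1 subn_gt0 (leq_trans _ hD).
have -> : D = (D - 3 + 3)%N by rewrite subnK.
by rewrite [in X in (_ < _ ^ X)%N]addnS /= sq_lt_pow_aux.
Qed.
Lemma mm_nz (F : finFieldType) : (4 < #|F|)%N -> mm F != 0.
Proof. by move=> hq; rewrite /mm pnatr_eq0 subn_eq0 -ltnNge (leq_trans _ hq). Qed.

Lemma no_wt (F : finFieldType) (N : nat) (C : code F N) (D k : nat) :
  (forall c, c \in C -> (D %| wt c)%N) -> ~~ (D %| k)%N -> (fpoly C)`_k = 0.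
Proof.
move=> hdiv nk; rewrite coef_fpoly -[0]/(0%:R); congr (_ %:R).
apply/eqP; rewrite -leqn0 leqNgt; apply/negP => /card_gt0P[c /andP[cC /eqP wc]].
by have := hdiv c cC; rewrite wc (negPf nk).
Qed.

Lemma case_ge3 (F : finFieldType) (N : nat) (C : code F N) (D : nat) :
  (4 < #|F|)%N -> formally_self_dual C -> (3 <= D)%N ->
  (forall c, c \in C -> (D %| wt c)%N) -> N = 0%N.
Proof.
move=> hq fsd hD hdiv; apply/eqP; apply: contraT => N0; exfalso.
have D0 : (0 < D)%N by rewrite (leq_trans _ hD).
have [g prim] := C_prim_root_exists D0.
have gn0 : g != 0.
  apply/negP => /eqP g0; have := prim_expr_order prim.
  by rewrite g0 expr0n gtn_eqF // => /eqP; rewrite eq_sym oner_eq0.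
have key j : (1 <= j < D)%N ->
    (1 - g ^+ j) * (1 - (g ^+ j)^-1) / #|F|%:R \in Aint.
  move=> /andP[j1 jD]; set z := g ^+ j.
  have zn0 : z != 0 by rewrite expf_neq0.
  have hrot x y : weight_enum C x (z * y) = weight_enum C x y.
    apply: (W_rot x y hdiv); by rewrite /z -exprM mulnC exprM (prim_expr_order prim) expr1n.
  case: (branch hq fsd zn0 hrot) => [[k [k0 hk]]|[a [aN hf]]].
    by have := kappa_Aint hq zn0 k0; apply.
  have [e|ne] := eqVneq (al F z) (be F z).
    apply: (kappa_Aint hq zn0 (k := 1%N)) => //.
    by rewrite expr1 /rho e divff // B_nz.
  exfalso.
  have f1 : (fpoly C)`_1 = 0.
    by apply: (no_wt hdiv); apply/negP => /dvdn_leq h; have := h isT; rewrite leqNgt (leq_trans _ hD).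
  have f2 : (fpoly C)`_2 = 0.
    by apply: (no_wt hdiv); apply/negP => /dvdn_leq h; have := h isT; rewrite leqNgt (leq_trans _ hD).
  rewrite hf coefM1 !coef_lin_exp !bin0 !bin1 !expr0 !expr1 !mul1r !mulr1 in f1.
  rewrite hf coefM2 !coef_lin_exp !bin0 !bin1 !expr0 !expr1 !mul1r !mulr1 in f2.
  set A := (a%:R : algC) in f1 f2; set B := ((N - a)%:R : algC) in f1 f2.
  set x := al F z in f1 f2 ne; set y := be F z in f1 f2 ne.
  have xy : x * y != 0.
    by rewrite /x /y altbe oppr_eq0 mulf_neq0 ?mm_nz.
  have xn0 : x != 0 by apply: contraNneq xy => ->; rewrite mul0r.
  have yn0 : y != 0 by apply: contraNneq xy => ->; rewrite mulr0.
  have E : A * x * (x - y) = (B * y + A * x) ^+ 2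
      - (2 * ('C(N - a, 2))%:R * y ^+ 2 + 2 * (A * x * (B * y)) + 2 * ('C(a, 2))%:R * x ^+ 2)
      - y * (B * y + A * x).
    by rewrite !bin2_alg /A /B; ring.
  have : ('C(N - a, 2))%:R * y ^+ 2 + A * x * (B * y) + ('C(a, 2))%:R * x ^+ 2 = 0 by [].
  move=> f2'; rewrite f1 in E.
  have E2 : A * x * (x - y) = 0.
    rewrite E; have -> : 2 * ('C(N - a, 2))%:R * y ^+ 2 + 2 * (A * x * (B * y)) +
       2 * ('C(a, 2))%:R * x ^+ 2 = 2 * (('C(N - a, 2))%:R * y ^+ 2 + A * x * (B * y) + ('C(a, 2))%:R * x ^+ 2) by ring.
    by rewrite f2'; ring.
  have xmy : x - y != 0 by rewrite subr_eq0.
  have A0 : A = 0.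
    have h : A = A * x * (x - y) / (x * (x - y)).
      by field; rewrite xmy xn0.
    by rewrite h E2 mul0r.
  have B0 : B = 0.
    have h : B = (B * y + A * x) / y by rewrite A0 mul0r addr0; field; rewrite yn0.
    by rewrite h f1 mul0r.
  move: A0 B0; rewrite /A /B => /eqP; rewrite pnatr_eq0 => /eqP ->.
  by move/eqP; rewrite pnatr_eq0 subn0 (negPf N0).
have hprod : \prod_(1 <= j < D) ((1 - g ^+ j) * (1 - (g ^+ j)^-1) / #|F|%:R) \in Aint.
  rewrite big_seq_cond; apply: rpred_prod => j /andP[].
  by rewrite mem_index_iota => /key.
rewrite big_split big_split /= prod_one_sub // prod_one_subV // prodr_const_nat in hprod.
rewrite exprVn -natrM -natrX subn1 in hprod.
apply: (ratq_notAint _ _ hprod); first by rewrite muln_gt0 D0.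
by apply: sq_lt_pow => //.
Qed.
Lemma case_2 (F : finFieldType) (n : nat) (C : code F (2 * n)) :
  (4 < #|F|)%N -> formally_self_dual C ->
  (forall c, c \in C -> (2 %| wt c)%N) ->
  \dim C = n /\ #|[pred c in C | wt c == 2%N]| = (n * (#|F| - 1))%N.
Proof.
move=> hq fsd hdiv.
have zn0 : (-1 : algC) != 0 by rewrite oppr_eq0 oner_eq0.
have hrot x y : weight_enum C x (-1 * y) = weight_enum C x y.
  by apply: (W_rot x y hdiv); rewrite sqrrN expr1n.
case: (branch hq fsd zn0 hrot) => [[k [k0 hk]]|[a [aN hf]]].
  have := kappa_Aint hq zn0 k0 hk.
  have -> : (1 - -1) * (1 - (-1)^-1) / #|F|%:R = (4%:R / #|F|%:R : algC).
    by rewrite invrN invr1; congr (_ / _); ring.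
  by move/ratq_notAint => /(_ isT hq).
set x := al F (-1) in hf; set y := be F (-1) in hf.
have yE : y = - x by apply/eqP; rewrite -addr_eq0 addrC /x /y alpbe addrN oppr0.
have x2 : x ^+ 2 = - mm F.
  have h := altbe F (-1); rewrite -/x -/y yE in h.
  have -> : x ^+ 2 = - (x * - x) by ring.
  by rewrite h; ring.
have xn0 : x != 0.
  by apply/negP => /eqP x0; move: x2; rewrite x0 expr0n /= => /eqP;
    rewrite eq_sym oppr_eq0 (negPf (mm_nz hq)).
have f1 : (fpoly C)`_1 = 0 by apply: (no_wt hdiv).
rewrite hf coefM1 !coef_lin_exp !bin0 !bin1 !expr0 !expr1 !mul1r !mulr1 yE in f1.
have an : a = n.
  have : ((2 * n - a)%N)%:R * x = a%:R * x :> algC.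
    by apply/eqP; rewrite -subr_eq0 -oppr_eq0; apply/eqP; rewrite -[RHS]f1; ring.
  move/(mulIf xn0)/natr_inj_C => h; lia.
subst a.
have e2 : (2 * n - n = n)%N by lia.
rewrite e2 in hf.
split.
  have h1 := fpoly1 C; rewrite hf !(hornerM, horner_exp, hornerD, hornerZ, hornerX, hornerC) in h1.
  rewrite !mulr1 -exprMn yE in h1.
  have eq1 : (1 + x) * (1 + - x) = #|F|%:R by rewrite qE // -[mm F]opprK -x2; ring.
  rewrite eq1 in h1.
  rewrite -natrX in h1; move/natr_inj_C: h1 => h1.
  by apply/esym/(expnI _ h1); rewrite (leq_trans _ hq).
apply: natr_inj_C; rewrite -coef_fpoly hf coefM2 !coef_lin_exp !bin0 !bin1 !expr0 !expr1 !mul1r !mulr1 yE.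
rewrite natrM natrB ?(leq_trans _ hq) //.
have e : ((#|F| : nat)%:R - 1 : algC) = mm F by rewrite qE // addrK.
rewrite e -[mm F]opprK -x2.
have h := bin2_alg n.
have -> : 'C(n, 2)%:R * (- x) ^+ 2 + n%:R * x * (n%:R * - x) + 'C(n, 2)%:R * x ^+ 2
   = (2 * 'C(n, 2)%:R) * x ^+ 2 - n%:R * n%:R * x ^+ 2 by ring.
rewrite h; ring.
Qed.
Lemma two_elem (T : finType) (P : {set T}) i : #|P| = 2%N -> i \in P ->
  exists j, j != i /\ P = [set i; j].
Proof.
move=> P2 iP; have := cardsD1 i P; rewrite P2 iP /= => /eqP; rewrite eqSS => /eqP h.
have /cards1P[j hj] : #|P :\ i| == 1%N by rewrite -h.
exists j; split.
  apply/negP => /eqP ji; have : j \in P :\ i by rewrite hj set11.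
  by rewrite ji setD11.
by rewrite -[LHS](setD1K iP) hj.
Qed.

Section Comb.
Variables (F : finFieldType) (n : nat) (C : code F (2 * n)).
Hypothesis hq : (2 < #|F|)%N.
Hypothesis h2 : forall c, c \in C -> (2 %| wt c)%N.
Hypothesis hdim : \dim C = n.
Hypothesis hcnt : #|[pred c in C | wt c == 2%N]| = (n * (#|F| - 1))%N.

Definition supp (c : 'rV[F]_(2 * n)) := [set i | c 0 i != 0].
Definition A2 := [set c : 'rV[F]_(2 * n) | (c \in C) && (wt c == 2%N)].
Definition SS := [set supp c | c in A2].

Lemma in_supp c i : (i \in supp c) = (c 0 i != 0).
Proof. by rewrite inE. Qed.

Lemma wt_supp c : wt c = #|supp c|. Proof. by []. Qed.

Lemma mult c c' : c \in C -> wt c = 2%N -> c' \in C -> supp c' \subset supp c ->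
  exists k, c' = k *: c.
Proof.
move=> cC w2 c'C sub.
have /card_gt0P[i iP] : (0 < #|supp c|)%N by rewrite -wt_supp w2.
have ci : c 0 i != 0 by rewrite -in_supp.
exists (c' 0 i / c 0 i); pose d := c' - (c' 0 i / c 0 i) *: c.
have dC : d \in C by rewrite rpredB ?rpredZ.
have sd : supp d \subset supp c :\ i.
  apply/subsetP => l; rewrite in_supp !inE /d !mxE => hl; apply/andP; split.
    by apply/negP => /eqP li; subst l; move: hl; rewrite divfK // subrr eqxx.
  apply/negP => /eqP cl; move: hl.
  have : c' 0 l = 0.
    apply/eqP; apply/negPn/negP => h; have := subsetP sub l.
    by rewrite !in_supp h cl eqxx => /(_ isT).
  by move=> ->; rewrite cl mulr0 subrr eqxx.
have wd : (wt d <= 1)%N.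
  rewrite wt_supp (leq_trans (subset_leq_card sd)) //.
  by have := cardsD1 i (supp c); rewrite -wt_supp w2 iP => /eqP; rewrite eqSS => /eqP <-.
have wd0 : wt d = 0%N.
  move: (h2 dC) wd; case: (wt d) => [//|[|//]] /=; by rewrite dvdn1.
move/eqP: wd0; rewrite wt_eq0 /d subr_eq0 => /eqP.
done.
Qed.

Lemma suppZ k c : k != 0 -> supp (k *: c) = supp c.
Proof. by move=> k0; apply/setP => l; rewrite !in_supp mxE mulf_eq0 (negPf k0). Qed.

Lemma fiber P : P \in SS -> #|[set c in A2 | supp c == P]| = (#|F| - 1)%N.
Proof.
case/imsetP => c0 c0A ->; move: (c0A); rewrite inE => /andP[c0C /eqP w0].
have /card_gt0P[i iP] : (0 < #|supp c0|)%N by rewrite -wt_supp w0.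
have c0i : c0 0 i != 0 by rewrite -in_supp.
have -> : [set c in A2 | supp c == supp c0] = [set k *: c0 | k in [set~ 0]].
  apply/setP => c; rewrite !inE; apply/idP/imsetP.
    case/andP => /andP[cC wc] /eqP sc.
    have sub : supp c \subset supp c0 by rewrite sc.
    have [k ck] := mult c0C w0 cC sub.
    exists k => //; rewrite !inE; apply/negP => /eqP k0.
    move: wc; rewrite ck k0 scale0r.
    have : wt (0 : 'rV[F]_(2 * n)) = 0%N by apply/eqP; rewrite wt_eq0.
    by move=> ->.
  case=> k; rewrite !inE => k0 ->.
  by rewrite rpredZ //= wt_supp suppZ // -wt_supp w0 !eqxx.
rewrite card_in_imset ?cardsC1 ?subn1 //.
move=> k k' _ _ /rowP /(_ i); rewrite !mxE; exact: (mulIf c0i).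
Qed.

Lemma cardSS : #|SS| = n.
Proof.
have q1 : (0 < #|F| - 1)%N by rewrite subn_gt0 (leq_trans _ hq).
apply/eqP; rewrite -(eqn_pmul2r q1) -hcnt; apply/eqP.
have -> : #|[pred c in C | wt c == 2%N]| = #|A2|.
  by apply: eq_card => c; rewrite !inE.
rewrite -[#|A2|]sum1_card (partition_big supp (mem SS)) /=; last first.
  by move=> c cA; apply/imsetP; exists c.
rewrite -sum_nat_const; apply: eq_bigr => P PS.
by rewrite -(fiber PS) -sum1_card; apply: eq_bigl => c; rewrite inE.
Qed.


Lemma exists_t (b : F) : exists t : F, (t != 0) && (t != b).
Proof.
have : ~~ ([set: F] \subset [set 0; b]).
  apply/negP => /subset_leq_card; rewrite cardsT cards2 => h.
  have : (#|F| <= 2)%N by apply: (leq_trans h); case: (_ != _).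
  by rewrite leqNgt hq.
case/subsetPn => t _; rewrite !inE negb_or => /andP[t0 tb].
by exists t; rewrite t0 tb.
Qed.

Lemma disj P P' : P \in SS -> P' \in SS -> P != P' -> [disjoint P & P'].
Proof.
case/imsetP => c cA ->; case/imsetP => c' c'A -> neq.
move: cA c'A; rewrite !inE => /andP[cC /eqP wc] /andP[c'C /eqP wc'].
apply/pred0P => i /=; apply/negP => /andP[iP iP'].
have [j [ji Pj]] := two_elem wc iP.
have [k [ki Pk]] := two_elem wc' iP'.
have jk : j != k by apply: contraNneq neq => jk; rewrite /supp Pj Pk jk.
have cE l : (c 0 l != 0) = (l \in [set i; j]).
  by move/setP: Pj => /(_ l); rewrite inE => ->.
have c'E l : (c' 0 l != 0) = (l \in [set i; k]).
  by move/setP: Pk => /(_ l); rewrite inE => ->.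
have ci : c' 0 i != 0 by rewrite c'E set21.
have [t /andP[t0 tb]] := exists_t (- (c 0 i) / c' 0 i).
have di : c 0 i + t * c' 0 i != 0.
  apply: contra tb => /eqP h; apply/eqP.
  have h' : t * c' 0 i = - c 0 i by apply/eqP; rewrite -addr_eq0 addrC h.
  by rewrite -h' mulfK.
pose d := c + t *: c'.
have dC : d \in C by rewrite rpredD ?rpredZ.
have sd : supp d = [set i; j; k].
  apply/setP => l; rewrite in_supp /d !mxE !inE.
  have [->|li] := eqVneq l i; first by rewrite di.
  have [->|lj] := eqVneq l j.
    have : c' 0 j = 0 by apply/eqP; rewrite -[_ == 0]negbK c'E !inE (negPf ji) (negPf jk).
    by move=> ->; rewrite mulr0 addr0 cE set22.
  have [->|lk] := eqVneq l k.
    have : c 0 k = 0.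
      by apply/eqP; rewrite -[_ == 0]negbK cE !inE (negPf ki) eq_sym (negPf jk).
    by move=> ->; rewrite add0r mulf_eq0 (negPf t0) /= c'E set22.
  have -> : c 0 l = 0 by apply/eqP; rewrite -[_ == 0]negbK cE !inE (negPf li) (negPf lj).
  have -> : c' 0 l = 0 by apply/eqP; rewrite -[_ == 0]negbK c'E !inE (negPf li) (negPf lk).
  by rewrite mulr0 addr0 eqxx.
have w3 : wt d = 3%N.
  rewrite wt_supp sd.
  have -> : [set i; j; k] = i |: [set j; k] by apply/setP => l; rewrite !inE orbA.
  rewrite cardsU1 cards2 jk !inE negb_or.
  by rewrite eq_sym ji eq_sym ki.
by have := h2 dC; rewrite w3.
Qed.


Lemma SS_card2 P : P \in SS -> #|P| = 2%N.
Proof. by case/imsetP => c; rewrite inE => /andP[_ /eqP w] ->. Qed.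

Lemma cover_all l : exists2 P, P \in SS & l \in P.
Proof.
have tS : trivIset SS by apply/trivIsetP => A B AS BS; exact: disj.
have cc : #|cover SS| = (2 * n)%N.
  move: tS; rewrite /trivIset => /eqP <-.
  rewrite (eq_bigr (fun _ => 2%N)); last by move=> P PS; rewrite SS_card2.
  by rewrite sum_nat_const cardSS mulnC.
have cT : cover SS = setT.
  apply/eqP; rewrite eqEcard subsetT cardsT card_ord cc leqnn //.
have : l \in cover SS by rewrite cT inE.
by case/bigcupP => P PS lP; exists P.
Qed.

Variable x0 : 'I_(2 * n).

Definition EE (k : nat) := nth set0 (enum SS) k.

Lemma size_enumSS : size (enum SS) = n.
Proof. by rewrite -cardE cardSS. Qed.

Lemma EE_in k : (k < n)%N -> EE k \in SS.
Proof. by move=> kn; rewrite -mem_enum mem_nth // size_enumSS. Qed.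

Lemma EE_inj k k' : (k < n)%N -> (k' < n)%N -> EE k = EE k' -> k = k'.
Proof.
move=> kn k'n /eqP; rewrite /EE nth_uniq ?size_enumSS ?enum_uniq //.
by move/eqP.
Qed.

Lemma memE k k' x : (k < n)%N -> (k' < n)%N -> x \in EE k -> x \in EE k' -> k = k'.
Proof.
move=> kn k'n xk xk'; apply/eqP; apply: contraT => kk.
have neq : EE k != EE k' by apply: contraNneq kk => /EE_inj -> .
have := disj (EE_in kn) (EE_in k'n) neq.
by move/pred0P/(_ x) => /=; rewrite xk xk'.
Qed.

Definition ecw (k : nat) : 'rV[F]_(2 * n) :=
  odflt 0 [pick c in A2 | supp c == EE k].

Lemma ecw_spec k : (k < n)%N -> ecw k \in A2 /\ supp (ecw k) = EE k.
Proof.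
move=> kn; rewrite /ecw; case: pickP => [c /andP[cA /eqP <-] //|hn].
exfalso; case/imsetP: (EE_in kn) => c cA E.
by have := hn c; rewrite cA E eqxx.
Qed.

Lemma ecwC k : (k < n)%N -> ecw k \in C.
Proof. by move/ecw_spec => [/[!inE] /andP[]]. Qed.

Lemma ecw_nz k l : (k < n)%N -> (ecw k 0 l != 0) = (l \in EE k).
Proof. by move/ecw_spec => [_ <-]; rewrite in_supp. Qed.

Definition pt (k b : nat) : 'I_(2 * n) := nth x0 (enum (EE k)) b.

Lemma size_enumE k : (k < n)%N -> size (enum (EE k)) = 2%N.
Proof. by move=> kn; rewrite -cardE SS_card2 // EE_in. Qed.

Lemma pt_in k b : (k < n)%N -> (b < 2)%N -> pt k b \in EE k.
Proof. by move=> kn b2; rewrite -mem_enum mem_nth // size_enumE. Qed.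

Definition sgm (l : 'I_(2 * n)) : 'I_(2 * n) := pt (l %/ 2) (l %% 2).

Lemma ldiv (l : 'I_(2 * n)) : (l %/ 2 < n)%N.
Proof. by rewrite ltn_divLR // (leq_trans (ltn_ord l)) // mulnC. Qed.

Lemma lmod (l : 'I_(2 * n)) : (l %% 2 < 2)%N.
Proof. by rewrite ltn_pmod. Qed.

Lemma sgm_in l : sgm l \in EE (l %/ 2).
Proof. exact: pt_in (ldiv l) (lmod l). Qed.

Lemma sgm_inj : injective sgm.
Proof.
move=> l l' h.
have e1 : (l %/ 2 = l' %/ 2)%N.
  by apply: (memE (ldiv l) (ldiv l') (sgm_in l)); rewrite h sgm_in.
have e2 : (l %% 2 = l' %% 2)%N.
  move: h; rewrite /sgm /pt e1 => /eqP.
  by rewrite nth_uniq ?size_enumE ?ldiv ?lmod ?enum_uniq // => /eqP.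
by apply: val_inj; rewrite /= (divn_eq l 2) (divn_eq l' 2) e1 e2.
Qed.


Definition sperm : 'S_(2 * n) := perm sgm_inj.
Definition dvec : 'rV[F]_(2 * n) := \row_l (ecw (l %/ 2) 0 (sgm l))^-1.
Definition MM := diag_mx dvec *m perm_mx sperm.

Lemma MM_entry (v : 'rV[F]_(2 * n)) l : ((MM *m v^T)^T) 0 l = dvec 0 l * v 0 (sgm l).
Proof.
by rewrite mxE /MM -mulmxA -row_permE mul_diag_mx !mxE permE.
Qed.

Lemma phi_e (k : 'I_n) : (MM *m (ecw k)^T)^T = row k (rep_gen F n).
Proof.
apply/rowP => l; rewrite MM_entry !mxE.
have [e|ne] := eqVneq (l %/ 2)%N (k : nat).
  rewrite e mulVf //=.
  by have := ecw_nz (sgm l) (ltn_ord k); rewrite -e sgm_in => ->.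
have -> : ecw k 0 (sgm l) = 0.
  apply/eqP; rewrite -[_ == 0]negbK ecw_nz //; apply/negP => h.
  by have := memE (ldiv l) (ltn_ord k) (sgm_in l) h; move/eqP: ne.
by rewrite mulr0.
Qed.

Lemma freeX : free [tuple ecw k | k < n].
Proof.
apply/freeP => a h i.
have nz : ecw i 0 (pt i 0) != 0 by rewrite ecw_nz // pt_in.
have := congr1 (fun v : 'rV[F]_(2 * n) => v 0 (pt i 0)) h.
rewrite /= summxE (bigD1 i) //= big1 ?addr0.
  rewrite !mxE nth_mktuple => /eqP; rewrite mulf_eq0 (negPf nz) orbF.
  by move/eqP.
move=> j ji; rewrite !mxE nth_mktuple.
have -> : ecw j 0 (pt i 0) = 0.
  apply/eqP; rewrite -[_ == 0]negbK ecw_nz //; apply/negP => h'.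
  have := memE (ltn_ord j) (ltn_ord i) h' (@pt_in i 0 (ltn_ord i) isT).
  by move/val_inj => e; move: ji; rewrite e eqxx.
by rewrite mulr0.
Qed.

Lemma spanX : <<[tuple ecw k | k < n]>>%VS = C.
Proof.
apply/eqP; rewrite eqEdim; apply/andP; split.
  apply/span_subvP => v /mapP [k _ ->]; exact: ecwC.
by rewrite hdim (eqP freeX) size_tuple.
Qed.

Lemma comb_main : monomially_equivalent C (rep_sum F n).
Proof.
exists (diag_mx dvec), sperm; split; first exact: diag_mx_is_diag.
split.
  rewrite unitmxE det_diag unitfE; apply/prodf_neq0 => l _.
  by rewrite mxE invr_eq0 ecw_nz ?ldiv // sgm_in.
pose lf := linfun (@mulmxr F 1 _ _ MM^T).
have imC : rep_sum F n = (lf @: C)%VS.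
  rewrite -spanX limg_span /rep_sum; congr (span _).
  have e : [tuple ecw k | k < n] = [seq ecw k | k : 'I_n <- enum 'I_n] :> seq 'rV[F]_(2 * n).
    by rewrite /mktuple /=.
  rewrite e -[in RHS]map_comp; apply: eq_map => k /=.
  by rewrite /lf lfunE /= -phi_e trmx_mul trmxK.
move=> v; rewrite imC; split.
  case/memv_imgP => c cC ->; exists c => //.
  by rewrite /lf lfunE /= [RHS]trmx_mul trmxK.
case=> c cC ->; apply/memv_imgP; exists c => //.
by rewrite /lf lfunE /= [LHS]trmx_mul trmxK.
Qed.

End Comb.
Lemma rV0_eq (F : finFieldType) (u v : 'rV[F]_(2 * 0)) : u = v.
Proof. by apply/rowP => -[i hi]; exfalso; move: hi; rewrite muln0. Qed.

Unset Implicit Arguments.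
Theorem corollary3p7 (F : finFieldType) (n : nat) (C : code F (2 * n)) :
  (4 < #|F|)%N ->
  formally_self_dual C ->
  divisible C ->
  monomially_equivalent C (rep_sum F n).
Proof.
move=> hq fsd [D [D1 hdiv]].
have [n0|npos] := eqVneq n 0%N.
  subst n; exists 1%:M, 1%g; split; first exact: scalar_mx_is_diag.
  split; first by rewrite unitmx1.
  move=> v; split=> _.
    by exists 0; [exact: mem0v | exact: rV0_eq].
  by rewrite (rV0_eq v 0) mem0v.
have [D2|D3] := eqVneq D 2%N.
  subst D.
  have [hdim hcnt] := case_2 hq fsd hdiv.
  have n1 : (0 < n)%N by rewrite lt0n.
  have x0 : 'I_(2 * n) by exists 0%N; rewrite muln_gt0 n1.
  apply: (comb_main _ hdiv hdim hcnt x0).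
  by rewrite (leq_trans _ hq).
have hD : (3 <= D)%N by move: D1 D3; clear; case: D => [|[|[|]]].
have := case_ge3 hq fsd hD hdiv => /eqP; rewrite muln_eq0 /= => /eqP n0.
by rewrite n0 eqxx in npos.
Qed.
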